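(* Let $(A;A^+)$ be an $\mathbb{F}_1$-algebra pair. Every projective $\mathbb{B}[A;A^+]$-module is isomorphic to $\mathbb{B}(M,\le)$ for some partially ordered $A$-module $(M,\le)$.
   Context: $(A;A^+)$: $A$ a commutative monoid with zero (multiplicative), $A^+\subseteq A$ a sharp submonoid containing $0$. $A$-modules are pointed sets with $A$-action ($0$ acts to the base point, base point fixed). $\mathbb{B}[A;A^+]$ is the idempotent semiring of finitely generated $A^+$-submodules of $A$ with $\vee$ = union and $+$ = elementwise product. A partially ordered $A$-module is an $A$-module with a partial order such that $fv\le gv$ whenever $f\in A^+g$, and $v\le w\Rightarrow fv\le fw$ for $f\in A$. $\mathbb{B}(M,\le)$ is the set of $A^+$-submodules of $M$ that are lower sets and are the downward closure of a finitely generated $A^+$-submodule, a $\mathbb{B}[A;A^+]$-module under union and elementwise multiplication. A module is projective if every surjection onto it has a section. *)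

(* Defs.v *)
From Stdlib Require Import List.
Import ListNotations.
Set Implicit Arguments.

(* A : commutative monoid with (absorbing) zero, written multiplicatively;
   A^+ (f1plus) : a sharp submonoid containing 0 (its only unit is 1). *)
Record F1Pair := {
  f1A :> Type;
  f1mul : f1A -> f1A -> f1A;
  f1one : f1A;
  f1zero : f1A;
  f1mulA : forall x y z, f1mul x (f1mul y z) = f1mul (f1mul x y) z;
  f1mulC : forall x y, f1mul x y = f1mul y x;
  f1mul1 : forall x, f1mul f1one x = x;
  f1mul0 : forall x, f1mul f1zero x = f1zero;
  f1plus : f1A -> Prop;
  f1plus1 : f1plus f1one;
  f1plus0 : f1plus f1zero;
  f1plusM : forall x y, f1plus x -> f1plus y -> f1plus (f1mul x y);
  f1sharp : forall x y, f1plus x -> f1plus y -> f1mul x y = f1one -> x = f1one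
}.

Arguments f1mul {_} _ _.
Arguments f1plus {_} _.

Section BA.
Variable A : F1Pair.
Local Notation "x * y" := (f1mul x y).

Definition genA (gs : list A) : A -> Prop :=
  fun x => x = f1zero A \/ exists g h, In g gs /\ f1plus h /\ x = h * g.

Definition fgsubA (S : A -> Prop) : Prop :=
  exists gs : list A, forall x, S x <-> genA gs x.

Definition BA := { S : A -> Prop | fgsubA S }.

Lemma mul1r (x : A) : x * f1one A = x.
Proof. rewrite f1mulC; apply f1mul1. Qed.

Lemma mul0r (x : A) : x * f1zero A = f1zero A.
Proof. rewrite f1mulC; apply f1mul0. Qed.

Lemma mulACA (a b c d : A) : (a * b) * (c * d) = (a * c) * (b * d).
Proof.
  rewrite <- !f1mulA; f_equal. rewrite !f1mulA; f_equal; apply f1mulC.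
Qed.

Lemma genA0 gs : genA gs (f1zero A).
Proof. left; reflexivity. Qed.

Lemma fg_zero : fgsubA (fun x => x = f1zero A).
Proof.
  exists []; intro x; split; intro H.
  - left; exact H.
  - destruct H as [H|[g [h [Hin _]]]]; [exact H| destruct Hin].
Qed.
Definition BAzero : BA := exist _ _ fg_zero.

Lemma fg_one : fgsubA (f1plus).
Proof.
  exists [f1one A]; intro x; split; intro H.
  - right; exists (f1one A), x; split; [left; reflexivity|split; [exact H|]].
    symmetry; apply mul1r.
  - destruct H as [H|[g [h [Hin [Hh Hx]]]]].
    + subst; apply f1plus0.
    + destruct Hin as [Hg|[]]; subst; rewrite mul1r; exact Hh.
Qed.
Definition BAone : BA := exist _ _ fg_one.

Lemma fg_join (I J : BA) :
  fgsubA (fun x => proj1_sig I x \/ proj1_sig J x).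
Proof.
  destruct I as [S [gs1 H1]], J as [T [gs2 H2]]; simpl.
  exists (gs1 ++ gs2); intro x; rewrite H1, H2; unfold genA; split.
  - intros [[H|[g [h [Hg Hh]]]]|[H|[g [h [Hg Hh]]]]]; auto;
      right; exists g, h; rewrite in_app_iff; auto.
  - intros [H|[g [h [Hg Hh]]]]; auto.
    apply in_app_iff in Hg as [Hg|Hg]; [left|right]; right; exists g, h; auto.
Qed.
Definition BAjoin (I J : BA) : BA := exist _ _ (fg_join I J).

Lemma fg_prod (I J : BA) :
  fgsubA (fun x => exists a b, proj1_sig I a /\ proj1_sig J b /\ x = a * b).
Proof.
  destruct I as [S [gs1 H1]], J as [T [gs2 H2]]; simpl.
  exists (flat_map (fun g1 => map (fun g2 => g1 * g2) gs2) gs1).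
  intro x; split.
  - intros [a [b [Ha [Hb Hx]]]]; subst x.
    apply H1 in Ha; apply H2 in Hb.
    destruct Ha as [Ha|[g1 [h1 [Hg1 [Hh1 Ha]]]]].
    + subst; left; apply f1mul0.
    + destruct Hb as [Hb|[g2 [h2 [Hg2 [Hh2 Hb]]]]].
      * subst; left; apply mul0r.
      * subst; right; exists (g1 * g2), (h1 * h2); split; [|split].
        -- apply in_flat_map; exists g1; split; auto; apply in_map; auto.
        -- apply f1plusM; auto.
        -- apply mulACA.
  - intros [Hx|[g [h [Hg [Hh Hx]]]]].
    + exists (f1zero A), (f1zero A); split; [apply H1, genA0|split; [apply H2, genA0|]].
      rewrite f1mul0; exact Hx.
    + apply in_flat_map in Hg as [g1 [Hg1 Hg]]; apply in_map_iff in Hg as [g2 [Hg Hg2]].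
      exists (h * g1), (f1one A * g2); split; [|split].
      * apply H1; right; exists g1, h; auto.
      * apply H2; right; exists g2, (f1one A); split; [auto|split; [apply f1plus1|reflexivity]].
      * subst; rewrite mulACA, mul1r; reflexivity.
Qed.
Definition BAprod (I J : BA) : BA := exist _ _ (fg_prod I J).

End BA.

Record BMod (A : F1Pair) := {
  bm :> Type;
  bplus : bm -> bm -> bm;
  bzero : bm;
  bact : BA A -> bm -> bm;
  bplusA : forall x y z, bplus x (bplus y z) = bplus (bplus x y) z;
  bplusC : forall x y, bplus x y = bplus y x;
  bplus0 : forall x, bplus bzero x = x;
  bactDr : forall I x y, bact I (bplus x y) = bplus (bact I x) (bact I y);
  bactDl : forall I J x, bact (BAjoin I J) x = bplus (bact I x) (bact J x);
  bactM : forall I J x, bact (BAprod I J) x = bact I (bact J x);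
  bact1 : forall x, bact (BAone A) x = x;
  bact0l : forall x, bact (BAzero A) x = bzero;
  bact0r : forall I, bact I bzero = bzero
}.

Arguments bplus {_ _} _ _.
Arguments bact {_ _} _ _.

Definition isBHom {A : F1Pair} {N P : BMod A} (f : N -> P) : Prop :=
  (forall x y, f (bplus x y) = bplus (f x) (f y)) /\
  f (bzero N) = bzero P /\
  (forall I x, f (bact I x) = bact I (f x)).

Definition projectiveB (A : F1Pair) (P : BMod A) : Prop :=
  forall (N : BMod A) (p : N -> P), isBHom p -> (forall y, exists x, p x = y) ->
    exists s : P -> N, isBHom s /\ forall y, p (s y) = y.

Record AMod (A : F1Pair) := {
  am :> Type;
  ambase : am;
  amact : A -> am -> am;
  amact1 : forall v, amact (f1one A) v = v;
  amactM : forall f g v, amact (f1mul f g) v = amact f (amact g v);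
  amact0 : forall v, amact (f1zero A) v = ambase;
  amactb : forall f, amact f ambase = ambase
}.

Arguments amact {_ _} _ _.

Record POAMod (A : F1Pair) := {
  pom :> AMod A;
  ple : pom -> pom -> Prop;
  ple_refl : forall v, ple v v;
  ple_trans : forall u v w, ple u v -> ple v w -> ple u w;
  ple_antisym : forall v w, ple v w -> ple w v -> v = w;
  ple_scal : forall f g v, (exists h, f1plus h /\ f = f1mul h g) ->
               ple (amact f v) (amact g v);
  ple_mono : forall f v w, ple v w -> ple (amact f v) (amact f w)
}.

Arguments ple {_ _} _ _.

Section BM.
Variables (A : F1Pair) (M : POAMod A).

Definition genM (gs : list M) : M -> Prop :=
  fun u => u = ambase M \/
    exists g h, In g gs /\ f1plus h /\ u = amact h g.

Definition inBM (N : M -> Prop) : Prop :=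
  (N (ambase M) /\ forall f v, f1plus f -> N v -> N (amact f v)) /\
  (forall v w, ple v w -> N w -> N v) /\
  (exists gs : list M, forall v, N v <-> exists u, genM gs u /\ ple v u).

Definition BMset := { N : M -> Prop | inBM N }.

Definition BMjoin (N1 N2 : M -> Prop) : M -> Prop := fun v => N1 v \/ N2 v.
Definition BMzero : M -> Prop := fun v => ple v (ambase M).
Definition BMact (I : BA A) (N : M -> Prop) : M -> Prop :=
  fun v => exists f w, proj1_sig I f /\ N w /\ ple v (amact f w).

End BM.
Arguments BMjoin {_ _} _ _ _.
Arguments BMact {_ _} _ _ _.

Definition isoBM (A : F1Pair) (P : BMod A) (M : POAMod A) : Prop :=
  exists phi : P -> BMset M,
    (forall x y, phi x = phi y -> x = y) /\
    (forall N, exists x, phi x = N) /\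
    (forall x y v, proj1_sig (phi (bplus x y)) v <->
                   BMjoin (proj1_sig (phi x)) (proj1_sig (phi y)) v) /\
    (forall v, proj1_sig (phi (bzero P)) v <-> BMzero M v) /\
    (forall I x v, proj1_sig (phi (bact I x)) v <->
                   BMact I (proj1_sig (phi x)) v).

(* Main.v *)
Require Import Defs.
From Stdlib Require Import List FunctionalExtensionality PropExtensionality ProofIrrelevance ClassicalDescription IndefiniteDescription Lia.
Import ListNotations.
Set Implicit Arguments.
Set Implicit Arguments.
Unset Strict Implicit.

Section Gen.
Variable A : F1Pair.
Local Notation "x * y" := (f1mul x y).

Lemma BA_ext (I J : BA A) : (forall x, proj1_sig I x <-> proj1_sig J x) -> I = J.
Proof.
  destruct I as [I HI], J as [J HJ]; simpl; intro H.
  assert (I = J) by (apply functional_extensionality; intro x; apply propositional_extensionality; auto).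
  subst; f_equal; apply proof_irrelevance.
Qed.

Definition princ (g : A) : BA A := exist _ (genA A [g]) (ex_intro _ [g] (fun x => iff_refl _)).

Lemma genA1 g x : genA A [g] x <-> x = f1zero A \/ exists h, f1plus h /\ x = h * g.
Proof.
  unfold genA; split.
  - intros [H|[g' [h [[Hg|[]] [Hh Hx]]]]]; auto; subst; right; eauto.
  - intros [H|[h [Hh Hx]]]; auto; right; exists g, h; simpl; auto.
Qed.

Lemma princ_self g : proj1_sig (princ g) g.
Proof. simpl; apply genA1; right; exists (f1one A); split; [apply f1plus1|symmetry; apply f1mul1]. Qed.

Lemma BA_zero (I : BA A) : proj1_sig I (f1zero A).
Proof. destruct I as [I [gs H]]; simpl; apply H; left; reflexivity. Qed.

Lemma BA_cl (I : BA A) h f : f1plus h -> proj1_sig I f -> proj1_sig I (h * f).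
Proof.
  destruct I as [I [gs H]]; simpl; intros Hh Hf; apply H; apply H in Hf.
  destruct Hf as [Hf|[g [h' [Hg [Hh' Hf]]]]].
  - subst; left; apply mul0r.
  - subst; right; exists g, (h * h'); split; auto; split; [apply f1plusM; auto| apply f1mulA].
Qed.

Lemma princ_sub (I : BA A) f x : proj1_sig I f -> proj1_sig (princ f) x -> proj1_sig I x.
Proof.
  intros Hf Hx; simpl in Hx; apply genA1 in Hx as [Hx|[h [Hh Hx]]]; subst.
  - apply BA_zero.
  - apply BA_cl; auto.
Qed.

Lemma princ_one : princ (f1one A) = BAone A.
Proof.
  apply BA_ext; intro x; simpl; rewrite genA1; split.
  - intros [H|[h [Hh H]]]; subst; [apply f1plus0| rewrite mul1r; auto].
  - intro H; right; exists x; split; auto; rewrite mul1r; auto.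
Qed.

Lemma princ_zero : princ (f1zero A) = BAzero A.
Proof.
  apply BA_ext; intro x; simpl; rewrite genA1; split.
  - intros [H|[h [Hh H]]]; subst; auto; apply mul0r.
  - auto.
Qed.

Lemma princ_mul f g : princ (f * g) = BAprod (princ f) (princ g).
Proof.
  apply BA_ext; intro x; simpl; rewrite genA1; split.
  - intros [H|[h [Hh H]]]; subst.
    + exists (f1zero A), (f1zero A); rewrite !genA1; split; auto; split; auto; symmetry; apply f1mul0.
    + exists (h * f), (f1one A * g); rewrite !genA1; split; [right; eauto|split; [right; exists (f1one A); split; auto; apply f1plus1|]].
      rewrite mulACA, mul1r; reflexivity.
  - intros [a [b [Ha [Hb H]]]]; rewrite genA1 in Ha, Hb; subst.
    destruct Ha as [Ha|[h1 [Hh1 Ha]]]; subst; [left; apply f1mul0|].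
    destruct Hb as [Hb|[h2 [Hh2 Hb]]]; subst; [left; apply mul0r|].
    right; exists (h1 * h2); split; [apply f1plusM; auto|apply mulACA].
Qed.

Lemma BAjoin_sub (I J : BA A) : (forall x, proj1_sig J x -> proj1_sig I x) -> BAjoin I J = I.
Proof. intro H; apply BA_ext; intro x; simpl; intuition. Qed.

Definition bigjoin (l : list (BA A)) : BA A := fold_right (@BAjoin A) (BAzero A) l.

Lemma bigjoin_spec l x : proj1_sig (bigjoin l) x <-> x = f1zero A \/ exists J, In J l /\ proj1_sig J x.
Proof.
  induction l as [|J l IH]; simpl.
  - split; auto; intros [H|[J [[] _]]]; auto.
  - rewrite IH; split.
    + intros [H|[H|[J' [HJ H]]]]; eauto.
    + intros [H|[J' [[HJ|HJ] H]]]; subst; eauto.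
Qed.

End Gen.
Arguments princ {A} g.
Arguments princ_one {A}.
Arguments princ_zero {A}.
Arguments princ_mul {A} f g.
Arguments genA1 {A} g x.
Arguments princ_self {A} g.

Section Ord.
Variable A : F1Pair.
Variable P : BMod A.
Local Notation "x * y" := (f1mul x y).

Definition le (x y : P) := bplus x y = y.

Lemma idem (x : P) : bplus x x = x.
Proof.
  rewrite <- (bact1 P x) at 1 2. rewrite <- bactDl.
  rewrite BAjoin_sub; [apply bact1|auto].
Qed.

Lemma le_refl x : le x x. Proof. apply idem. Qed.
Lemma le_trans x y z : le x y -> le y z -> le x z.
Proof. unfold le; intros H1 H2; rewrite <- H2, bplusA, H1; reflexivity. Qed.
Lemma le_antisym x y : le x y -> le y x -> x = y.
Proof. unfold le; intros H1 H2; rewrite <- H1, <- H2 at 1; apply bplusC. Qed.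
Lemma le_zero x : le (bzero P) x.
Proof. apply bplus0. Qed.
Lemma le_plus_l x y : le x (bplus x y).
Proof. unfold le; rewrite bplusA, idem; auto. Qed.
Lemma le_plus_r x y : le y (bplus x y).
Proof. rewrite bplusC; apply le_plus_l. Qed.
Lemma plus_lub x y z : le x z -> le y z -> le (bplus x y) z.
Proof. unfold le; intros H1 H2; rewrite <- bplusA, H2, H1; auto. Qed.

Lemma bact_mono_r I x y : le x y -> le (bact I x) (bact I y).
Proof. unfold le; intro H; rewrite <- bactDr, H; auto. Qed.

Lemma bact_mono_l (I J : BA A) x : (forall f, proj1_sig I f -> proj1_sig J f) -> le (bact I x) (bact J x).
Proof.
  intro H; unfold le; rewrite <- (BAjoin_sub H) at 2. rewrite bactDl, bplusC; auto.
Qed.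

Definition sumP (l : list P) : P := fold_right bplus (bzero P) l.

Lemma sum_ub l x : In x l -> le x (sumP l).
Proof.
  induction l as [|y l IH]; simpl; [tauto|].
  intros [H|H]; [subst; apply le_plus_l|].
  eapply le_trans; [apply IH; auto|apply le_plus_r].
Qed.

Lemma sum_lub l z : (forall x, In x l -> le x z) -> le (sumP l) z.
Proof.
  induction l as [|y l IH]; simpl; intro H; [apply le_zero|].
  apply plus_lub; auto.
Qed.

Lemma sum_app l1 l2 : sumP (l1 ++ l2) = bplus (sumP l1) (sumP l2).
Proof.
  induction l1 as [|y l IH]; simpl; [symmetry; apply bplus0|].
  rewrite IH, bplusA; auto.
Qed.

Lemma bact_sum I l : bact I (sumP l) = sumP (map (bact I) l).
Proof.
  induction l as [|y l IH]; simpl; [apply bact0r|]. rewrite bactDr, IH; auto.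
Qed.

Lemma bact_bigjoin (l : list (BA A)) x : bact (bigjoin l) x = sumP (map (fun J => bact J x) l).
Proof.
  induction l as [|J l IH]; simpl; [apply bact0l|]. rewrite bactDl, IH; auto.
Qed.

End Ord.

Section Free.
Variable A : F1Pair.
Variable P : BMod A.
Local Notation "x * y" := (f1mul x y).

Definition genF (gs : list (A * P)) : A -> P -> Prop :=
  fun a y => a = f1zero A \/ exists g h, In (g, y) gs /\ f1plus h /\ a = h * g.
Definition fgF (S : A -> P -> Prop) := exists gs, forall a y, S a y <-> genF gs a y.
Definition NT := { S | fgF S }.

Lemma NT_ext (S T : NT) : (forall a y, proj1_sig S a y <-> proj1_sig T a y) -> S = T.
Proof.
  destruct S as [S HS], T as [T HT]; simpl; intro H.
  assert (S = T) by (apply functional_extensionality; intro a; apply functional_extensionality; intro y;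
    apply propositional_extensionality; auto).
  subst; f_equal; apply proof_irrelevance.
Qed.

Lemma N_zero (S : NT) y : proj1_sig S (f1zero A) y.
Proof. destruct S as [S [gs H]]; simpl; apply H; left; auto. Qed.

Lemma N_cl (S : NT) h a y : f1plus h -> proj1_sig S a y -> proj1_sig S (h * a) y.
Proof.
  destruct S as [S [gs H]]; simpl; intros Hh Ha; apply H; apply H in Ha.
  destruct Ha as [Ha|[g [h' [Hg [Hh' Ha]]]]].
  - subst; left; apply mul0r.
  - subst; right; exists g, (h * h'); split; auto; split; [apply f1plusM; auto| apply f1mulA].
Qed.

Lemma fgF_plus (S T : NT) : fgF (fun a y => proj1_sig S a y \/ proj1_sig T a y).
Proof.
  destruct S as [S [gs1 H1]], T as [T [gs2 H2]]; simpl.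
  exists (gs1 ++ gs2); intros a y; rewrite H1, H2; unfold genF; split.
  - intros [[H|[g [h [Hg Hh]]]]|[H|[g [h [Hg Hh]]]]]; auto;
      right; exists g, h; rewrite in_app_iff; auto.
  - intros [H|[g [h [Hg Hh]]]]; auto.
    apply in_app_iff in Hg as [Hg|Hg]; [left|right]; right; exists g, h; auto.
Qed.
Definition Nplus (S T : NT) : NT := exist _ _ (fgF_plus S T).

Lemma fgF_zero : fgF (fun a y => a = f1zero A).
Proof. exists []; intros a y; unfold genF; split; auto; intros [H|[g [h [[] _]]]]; auto. Qed.
Definition Nzero : NT := exist _ _ fgF_zero.

Definition actlist (gsI : list A) (gs : list (A * P)) : list (A * P) :=
  flat_map (fun v => map (fun gi => (gi * fst v, snd v)) gsI) gs.

Lemma fgF_act_list (I : BA A) (S : NT) gsI gs :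
  (forall x, proj1_sig I x <-> genA A gsI x) -> (forall a y, proj1_sig S a y <-> genF gs a y) ->
  forall a y, (exists f b, proj1_sig I f /\ proj1_sig S b y /\ a = f * b) <-> genF (actlist gsI gs) a y.
Proof.
  intros H1 H2 a y; split.
  - intros [f [b [Hf [Hb Ha]]]]; subst a.
    apply H1 in Hf; apply H2 in Hb.
    destruct Hf as [Hf|[gi [h1 [Hgi [Hh1 Hf]]]]]; [subst; left; apply f1mul0|].
    destruct Hb as [Hb|[g [h2 [Hg [Hh2 Hb]]]]]; [subst; left; apply mul0r|].
    subst; right; exists (gi * g), (h1 * h2); split; [|split; [apply f1plusM; auto|apply mulACA]].
    unfold actlist; apply in_flat_map; exists (g, y); split; auto.
    apply in_map_iff; exists gi; auto.
  - intros [Ha|[g [h [Hg [Hh Ha]]]]].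
    + exists (f1zero A), (f1zero A); split; [apply H1; left; auto|split; [apply H2; left; auto|]].
      rewrite f1mul0; auto.
    + unfold actlist in Hg; apply in_flat_map in Hg as [[g0 y0] [Hg0 Hg]].
      apply in_map_iff in Hg as [gi [Hgi Hgi']]; simpl in Hgi; injection Hgi; intros; subst.
      exists (h * gi), (f1one A * g0); split; [apply H1; right; exists gi, h; auto|split].
      * apply H2; right; exists g0, (f1one A); split; auto; split; auto; apply f1plus1.
      * rewrite mulACA, mul1r; auto.
Qed.

Lemma fgF_act (I : BA A) (S : NT) : fgF (fun a y => exists f b, proj1_sig I f /\ proj1_sig S b y /\ a = f * b).
Proof.
  destruct (proj2_sig I) as [gsI H1]; destruct (proj2_sig S) as [gs H2].
  exists (actlist gsI gs); apply fgF_act_list; auto.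
Qed.
Definition Nact (I : BA A) (S : NT) : NT := exist _ _ (fgF_act I S).

Definition NM : BMod A.
Proof.
  refine {| bm := NT; bplus := Nplus; bzero := Nzero; bact := Nact |};
  intros; apply NT_ext; intros a0 y0; simpl.
  - tauto.
  - tauto.
  - split; [intros [H|H]; auto; subst; apply N_zero|auto].
  - split; [intros [f [b [Hf [[Hb|Hb] Ha]]]]; [left|right]; eauto|].
    intros [[f [b [Hf [Hb Ha]]]]|[f [b [Hf [Hb Ha]]]]]; exists f, b; auto.
  - split; [intros [f [b [[Hf|Hf] [Hb Ha]]]]; [left|right]; eauto|].
    intros [[f [b [Hf [Hb Ha]]]]|[f [b [Hf [Hb Ha]]]]]; exists f, b; auto.
  - split.
    + intros [f [b [[f1 [f2 [Hf1 [Hf2 Hf]]]] [Hb Ha]]]]; subst.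
      exists f1, (f2 * b); split; auto; split; [exists f2, b; auto|symmetry; apply f1mulA].
    + intros [f1 [b1 [Hf1 [[f2 [b [Hf2 [Hb Hb1]]]] Ha]]]]; subst.
      exists (f1 * f2), b; split; [exists f1, f2; auto|split; auto]; apply f1mulA.
  - split.
    + intros [f [b [Hf [Hb Ha]]]]; subst; apply N_cl; auto.
    + intro H; exists (f1one A), a0; split; [apply f1plus1|split; auto; symmetry; apply f1mul1].
  - split.
    + intros [f [b [Hf [Hb Ha]]]]; subst; apply f1mul0.
    + intro H; subst; exists (f1zero A), (f1zero A); split; auto; split; [apply N_zero|symmetry; apply f1mul0].
  - split.
    + intros [f [b [Hf [Hb Ha]]]]; subst; apply mul0r.
    + intro H; subst; exists (f1zero A), (f1zero A); split; [apply BA_zero|split; auto; symmetry; apply f1mul0].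
Defined.

Definition tt (v : A * P) : P := bact (princ (fst v)) (snd v).

Definition piN (S : NT) : P :=
  sumP (map tt (proj1_sig (constructive_indefinite_description _ (proj2_sig S)))).

Lemma tt_zero y : tt (f1zero A, y) = bzero P.
Proof. unfold tt; simpl; rewrite princ_zero; apply bact0l. Qed.

Lemma tt_mono h g y : f1plus h -> le (tt (h * g, y)) (tt (g, y)).
Proof.
  intro Hh; apply bact_mono_l; intro f; apply princ_sub; simpl; apply genA1; right; eauto.
Qed.

Lemma tt_one y : tt (f1one A, y) = y.
Proof. unfold tt; simpl; rewrite princ_one; apply bact1. Qed.

Lemma sum_le_gen gs1 gs2 : (forall a y, genF gs1 a y -> genF gs2 a y) ->
  le (sumP (map tt gs1)) (sumP (map tt gs2)).
Proof.
  intro H; apply sum_lub; intros x Hx; apply in_map_iff in Hx as [[g y] [Hx Hg]]; subst.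
  assert (genF gs2 g y) as [Hz|[g' [h [Hg' [Hh Hgg]]]]].
  { apply H; right; exists g, (f1one A); split; auto; split; [apply f1plus1|symmetry; apply f1mul1]. }
  - subst; rewrite tt_zero; apply le_zero.
  - subst; eapply le_trans; [apply tt_mono; auto|apply sum_ub; apply in_map_iff; exists (g', y); auto].
Qed.

Lemma piN_spec (S : NT) gs : (forall a y, proj1_sig S a y <-> genF gs a y) -> piN S = sumP (map tt gs).
Proof.
  intro H; unfold piN; destruct (constructive_indefinite_description _ _) as [gs0 H0]; simpl.
  apply le_antisym; apply sum_le_gen; intros a y Hg; [apply H, H0|apply H0, H]; auto.
Qed.

Lemma piN_plus S T : piN (Nplus S T) = bplus (piN S) (piN T).
Proof.
  destruct (proj2_sig S) as [gs1 H1] eqn:E1; destruct (proj2_sig T) as [gs2 H2] eqn:E2.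
  rewrite (piN_spec H1), (piN_spec H2), (piN_spec (S := Nplus S T) (gs := gs1 ++ gs2)).
  - rewrite map_app, sum_app; auto.
  - intros a y; simpl; rewrite H1, H2; unfold genF; split.
    + intros [[H|[g [h [Hg Hh]]]]|[H|[g [h [Hg Hh]]]]]; auto;
        right; exists g, h; rewrite in_app_iff; auto.
    + intros [H|[g [h [Hg Hh]]]]; auto.
      apply in_app_iff in Hg as [Hg|Hg]; [left|right]; right; exists g, h; auto.
Qed.

Lemma piN_zero : piN Nzero = bzero P.
Proof.
  rewrite (piN_spec (S := Nzero) (gs := [])); auto.
  intros a y; simpl; unfold genF; split; auto; intros [H|[g [h [[] _]]]]; auto.
Qed.

Lemma sum_flat_map (F : A * P -> list (A * P)) l :
  sumP (map tt (flat_map F l)) = sumP (map (fun v => sumP (map tt (F v))) l).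
Proof.
  induction l as [|v l IH]; simpl; auto. rewrite map_app, sum_app, IH; auto.
Qed.

Lemma piN_act I S : piN (Nact I S) = bact I (piN S).
Proof.
  destruct (proj2_sig I) as [gsI H1]; destruct (proj2_sig S) as [gs H2].
  rewrite (piN_spec H2), (piN_spec (S := Nact I S) (gs := actlist gsI gs)).
  2: { intros a y; simpl; apply fgF_act_list; auto. }
  unfold actlist; rewrite sum_flat_map, bact_sum, map_map; f_equal; apply map_ext; intros [g y]; simpl.
  unfold tt at 2; simpl; rewrite <- bactM.
  assert (BAprod I (princ g) = bigjoin (map (fun gi => princ (gi * g)) gsI)) as ->.
  { apply BA_ext; intro x; rewrite bigjoin_spec; simpl; split.
    - intros [a [b [Ha [Hb Hx]]]]; apply H1 in Ha; rewrite genA1 in Hb; subst.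
      destruct Ha as [Ha|[gi [h1 [Hgi [Hh1 Ha]]]]]; [subst; left; apply f1mul0|].
      destruct Hb as [Hb|[h2 [Hh2 Hb]]]; [subst; left; apply mul0r|].
      subst; right; exists (princ (gi * g)); split; [apply in_map_iff; eauto|].
      simpl; apply genA1; right; exists (h1 * h2); split; [apply f1plusM; auto|apply mulACA].
    - intros [Hx|[J [HJ Hx]]].
      + exists (f1zero A), (f1zero A); split; [apply BA_zero|split; [simpl; apply genA1; auto|]].
        rewrite f1mul0; auto.
      + apply in_map_iff in HJ as [gi [HJ Hgi]]; subst; simpl in Hx; apply genA1 in Hx as [Hx|[h [Hh Hx]]].
        * exists (f1zero A), (f1zero A); split; [apply BA_zero|split; [simpl; apply genA1; auto|]].
          rewrite f1mul0; auto.
        * exists (h * gi), (f1one A * g); split; [apply H1; right; exists gi, h; simpl; auto|split].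
          -- simpl; apply genA1; right; exists (f1one A); split; auto; apply f1plus1.
          -- subst; rewrite mulACA, mul1r; auto. }
  rewrite bact_bigjoin, !map_map; auto.
Qed.

Lemma piN_hom : @isBHom A NM P piN.
Proof.
  split; [|split]; [apply piN_plus|apply piN_zero|apply piN_act].
Qed.

Definition downN (v : A * P) : NT := exist _ (genF [v]) (ex_intro _ [v] (fun a y => iff_refl _)).

Lemma piN_down v : piN (downN v) = tt v.
Proof.
  rewrite (piN_spec (S := downN v) (gs := [v])); [simpl; rewrite bplusC; apply bplus0|]. intros; simpl; tauto.
Qed.

Lemma piN_surj : forall y : P, exists x : NM, piN x = y.
Proof. intro y; exists (downN (f1one A, y)); rewrite piN_down; apply tt_one. Qed.

Lemma piN_ub (S : NT) v : proj1_sig S (fst v) (snd v) -> le (tt v) (piN S).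
Proof.
  destruct v as [c y]; simpl; destruct (proj2_sig S) as [gs H]; rewrite (piN_spec H).
  intro Hc; apply H in Hc as [Hc|[g [h [Hg [Hh Hc]]]]]; subst.
  - rewrite tt_zero; apply le_zero.
  - eapply le_trans; [apply tt_mono; auto|apply sum_ub; apply in_map_iff; exists (g, y); auto].
Qed.

Lemma piN_mono (S T : NT) : (forall a y, proj1_sig S a y -> proj1_sig T a y) -> le (piN S) (piN T).
Proof.
  intro H; unfold le; rewrite <- piN_plus; f_equal; apply NT_ext; simpl; intuition.
Qed.

End Free.

Lemma filter_lt {U} (p q : U -> bool) (L : list U) b :
  (forall x, p x = true -> q x = true) -> In b L -> p b = false -> q b = true ->
  length (filter p L) < length (filter q L).
Proof.
  intros H; induction L as [|x L IH]; simpl; [tauto|].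
  intros [Hb|Hb] Hp Hq.
  - subst; rewrite Hp, Hq; simpl.
    assert (length (filter p L) <= length (filter q L)).
    { clear -H. induction L as [|x L IH]; simpl; auto.
      destruct (p x) eqn:E; [rewrite (H x E); simpl; lia|destruct (q x); simpl; lia]. }
    lia.
  - specialize (IH Hb Hp Hq).
    destruct (p x) eqn:E; [rewrite (H x E); simpl; lia|destruct (q x); simpl; lia].
Qed.

Definition dec (Q : Prop) : bool := if excluded_middle_informative Q then true else false.
Lemma dec_true Q : dec Q = true <-> Q.
Proof. unfold dec; destruct (excluded_middle_informative Q); split; auto; discriminate. Qed.
Lemma dec_false Q : dec Q = false <-> ~ Q.
Proof. unfold dec; destruct (excluded_middle_informative Q); split; auto; try tauto; discriminate. Qed.

Lemma find_rec {U} (L : list U) (R Q : U -> U -> Prop) :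
  (forall a, R a a) -> (forall a b c, R a b -> R b c -> R a c) ->
  (forall a b, Q a b -> R a b) -> (forall a b c, Q a b -> R b c -> Q a c) ->
  (forall a, In a L -> exists b, In b L /\ Q a b) ->
  forall a, In a L -> exists b, In b L /\ R a b /\ Q b b.
Proof.
  intros Hr Ht HQR HQ Hp.
  set (cnt a := length (filter (fun c => dec (~ R c a)) L)).
  assert (forall n a, cnt a <= n -> In a L -> exists b, In b L /\ R a b /\ Q b b); [|eauto].
  induction n as [|n IH]; intros a Hn Ha; destruct (Hp a Ha) as [b [Hb Hab]];
    destruct (classic (R b a)) as [Hba|Hba]; try (exists a; split; auto; split; auto; eapply HQ; eauto; fail).
  - assert (cnt b < cnt a); [|lia].
    apply filter_lt with b; auto.
    + intros x Hx; cbv beta in *; rewrite dec_true in *; intro H; apply Hx; eapply Ht; eauto.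
    + apply dec_false; auto.
    + apply dec_true; auto.
  - assert (cnt b < cnt a).
    { apply filter_lt with b; auto.
      + intros x Hx; cbv beta in *; rewrite dec_true in *; intro H; apply Hx; eapply Ht; eauto.
      + apply dec_false; auto.
      + apply dec_true; auto. }
    destruct (IH b) as [c [Hc [Hbc Hcc]]]; [lia|auto|].
    exists c; split; auto; split; auto; eapply Ht; eauto.
Qed.

Section Main.
Variable A : F1Pair.
Variable P : BMod A.
Variable s : P -> NM P.
Hypothesis Hs : isBHom s.
Hypothesis Hps : forall y, piN (s y) = y.
Local Notation "x * y" := (f1mul x y).

Definition mem (v : A * P) (z : P) : Prop := proj1_sig (s z) (fst v) (snd v).

Lemma s_plus x y : s (bplus x y) = Nplus (s x) (s y).
Proof. destruct Hs as [H _]; apply H. Qed.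
Lemma s_zero : s (bzero P) = Nzero P.
Proof. destruct Hs as [_ [H _]]; apply H. Qed.
Lemma s_act I x : s (bact I x) = Nact I (s x).
Proof. destruct Hs as [_ [_ H]]; apply H. Qed.

Lemma smono a b v : le a b -> mem v a -> mem v b.
Proof. unfold le, mem; intros H Hv; rewrite <- H, s_plus; simpl; auto. Qed.

Lemma mem_zero v z : fst v = f1zero A -> mem v z.
Proof. unfold mem; intro H; rewrite H; apply N_zero. Qed.

Lemma s_sum v l : mem v (sumP l) -> fst v = f1zero A \/ exists z, In z l /\ mem v z.
Proof.
  induction l as [|z l IH]; simpl; unfold mem.
  - rewrite s_zero; simpl; auto.
  - rewrite s_plus; simpl; intros [H|H]; [right; exists z; auto|].
    destruct (IH H) as [H'|[z' [Hz H']]]; auto; right; exists z'; auto.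
Qed.

Lemma mem_le v z : mem v z -> le (tt v) z.
Proof. intro H; rewrite <- (Hps z); apply piN_ub; auto. Qed.

Definition recv v := mem v (tt v).
Definition isM (q : P) := exists v, recv v /\ q = tt v.

Lemma K v z : recv v -> (le (tt v) z <-> mem v z).
Proof. intro Hv; split; [intro H; eapply smono; eauto|apply mem_le]. Qed.

Lemma jp_list q l : isM q -> le q (sumP l) -> le q (bzero P) \/ exists z, In z l /\ le q z.
Proof.
  intros [v [Hv ->]] H; apply (K _ Hv) in H; apply s_sum in H as [H|[z [Hz H]]].
  - left; apply K; auto; apply mem_zero; auto.
  - right; exists z; split; auto; apply K; auto.
Qed.

Lemma jp2 q x y : isM q -> le q (bplus x y) -> le q x \/ le q y.
Proof.
  intros [v [Hv ->]] H; apply (K _ Hv) in H; unfold mem in H; rewrite s_plus in H; simpl in H.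
  destruct H as [H|H]; [left|right]; apply K; auto.
Qed.

Lemma tt_mul (f : A) (v : A * P) : tt (f * fst v, snd v) = bact (princ f) (tt v).
Proof. unfold tt; simpl; rewrite princ_mul, bactM; auto. Qed.

Lemma isM_act (f : A) q : isM q -> isM (bact (princ f) q).
Proof.
  intros [v [Hv ->]]; exists (f * fst v, snd v); split; [|symmetry; apply tt_mul].
  unfold recv, mem; rewrite tt_mul, s_act; simpl.
  exists f, (fst v); split; [apply princ_self|split; auto].
Qed.

Lemma isM_zero : isM (bzero P).
Proof.
  exists (f1zero A, bzero P); split; [apply mem_zero; auto|].
  unfold tt; simpl; rewrite bact0r; auto.
Qed.

Lemma decomp x : exists ms, (forall m, In m ms -> isM m) /\ x = sumP ms.
Proof.
  destruct (proj2_sig (s x)) as [gs H].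
  assert (Hx : x = sumP (map (@tt A P) gs)) by (rewrite <- (Hps x); apply piN_spec; auto).
  assert (Hin : forall a, In a gs -> mem a x).
  { intros [g y] Ha; unfold mem; apply H; right; exists g, (f1one A); split; auto; split; [apply f1plus1|symmetry; apply f1mul1]. }
  assert (Hf : forall a, In a gs -> exists b, In b gs /\
     (forall c y, proj1_sig (s (tt a)) c y -> proj1_sig (s (tt b)) c y) /\ recv b).
  { apply find_rec with (Q := fun a b => mem a (tt b)).
    - auto.
    - intros a b c H1 H2 c0 y H3; auto.
    - intros a b Hab c y Hc. exact (smono (mem_le Hab) (Hc : mem (c, y) (tt a))).
    - intros a b c Hab Hbc; apply Hbc; auto.
    - intros a Ha; pose proof (Hin a Ha) as Hm; rewrite Hx in Hm; apply s_sum in Hm as [Hm|[z [Hz Hm]]].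
      + exists a; split; auto; apply mem_zero; auto.
      + apply in_map_iff in Hz as [b [Hz Hb]]; subst; eauto. }
  assert (forall l, (forall a, In a l -> In a gs) -> exists ms, (forall m, In m ms -> isM m /\ le m x) /\
     (forall a, In a l -> le (tt a) (sumP ms))).
  { induction l as [|a l IH]; intro Hl.
    - exists []; split; simpl; tauto.
    - destruct IH as [ms [H1 H2]]; [intros; apply Hl; simpl; auto|].
      destruct (Hf a (Hl a (or_introl eq_refl))) as [b [Hb [Hab Hbb]]].
      exists (tt b :: ms); split.
      + intros m [Hm|Hm]; [subst|auto]; split; [exists b; auto|apply mem_le; apply Hin; auto].
      + intros a' [Ha'|Ha']; simpl.
        * subst; eapply le_trans; [|apply le_plus_l].
          rewrite <- (Hps (tt a')), <- (Hps (tt b)); apply piN_mono; auto.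
        * eapply le_trans; [apply H2; auto|apply le_plus_r]. }
  destruct (H0 gs (fun a H => H)) as [ms [H1 H2]].
  exists ms; split; [intros; apply H1; auto|].
  apply le_antisym.
  - rewrite Hx at 1; apply sum_lub; intros z Hz; apply in_map_iff in Hz as [a [<- Ha]]; auto.
  - apply sum_lub; intros; apply H1; auto.
Qed.

Definition Msub := { q : P | isM q }.

Lemma Msub_ext (a b : Msub) : proj1_sig a = proj1_sig b -> a = b.
Proof. destruct a, b; simpl; intro; subst; f_equal; apply proof_irrelevance. Qed.

Definition Mbase : Msub := exist _ (bzero P) isM_zero.
Definition Mact (f : A) (q : Msub) : Msub := exist _ (bact (princ f) (proj1_sig q)) (isM_act f (proj2_sig q)).

Definition MA : AMod A.
Proof.
  refine {| am := Msub; ambase := Mbase; amact := Mact |}; intros; apply Msub_ext; simpl.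
  - rewrite princ_one; apply bact1.
  - rewrite princ_mul; apply bactM.
  - rewrite princ_zero; apply bact0l.
  - apply bact0r.
Defined.

Definition MP : POAMod A.
Proof.
  refine {| pom := MA; ple := fun q r : Msub => le (proj1_sig q) (proj1_sig r) |}.
  - intros; apply le_refl.
  - intros u v w; apply le_trans.
  - intros v w H1 H2; apply Msub_ext; apply le_antisym; auto.
  - intros f g v [h [Hh ->]]; simpl; apply bact_mono_l; intro x; apply princ_sub.
    simpl; apply genA1; right; exists h; auto.
  - intros f v w H; simpl; apply bact_mono_r; auto.
Defined.

Lemma lift_list (l : list P) : (forall m, In m l -> isM m) -> exists l' : list Msub, map (@proj1_sig _ _) l' = l.
Proof.
  induction l as [|m l IH]; intro H; [exists []; auto|].
  destruct IH as [l' Hl']; [intros; apply H; simpl; auto|].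
  exists (exist _ m (H m (or_introl eq_refl)) :: l'); simpl; rewrite Hl'; auto.
Qed.

Lemma Gen (ms : list MP) (q : MP) :
  (exists u, genM MP ms u /\ ple q u) <-> le (proj1_sig q) (sumP (map (@proj1_sig _ _) ms)).
Proof.
  split.
  - intros [u [[Hu|[g [h [Hg [Hh Hu]]]]] Hq]]; subst; simpl in Hq.
    + eapply le_trans; [apply Hq|apply le_zero].
    + eapply le_trans; [apply Hq|]. simpl.
      eapply le_trans; [apply bact_mono_l with (J := BAone A); intro f; apply princ_sub; exact Hh|].
      rewrite bact1; apply sum_ub; apply in_map; auto.
  - intro H; destruct (jp_list (proj2_sig q) H) as [H'|[z [Hz H']]].
    + exists Mbase; split; [left; auto|exact H'].
    + apply in_map_iff in Hz as [g [<- Hg]].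
      exists g; split; [right; exists g, (f1one A); split; auto; split; [apply f1plus1|symmetry; apply (amact1 MA)]|exact H'].
Qed.

Lemma phi_inBM (x : P) : @inBM A MP (fun q : MP => le (proj1_sig q) x).
Proof.
  split; [split|split].
  - apply le_zero.
  - intros f v Hf Hv; simpl; eapply le_trans; [|apply Hv].
    eapply le_trans; [apply bact_mono_l with (J := BAone A); intro g; apply princ_sub; exact Hf|].
    rewrite bact1; apply le_refl.
  - intros v w H1 H2; eapply le_trans; [exact H1|exact H2].
  - destruct (decomp x) as [ms [Hms Hx]]; destruct (lift_list Hms) as [ms' Hms'].
    exists ms'; intro v; rewrite Gen, Hms', <- Hx; tauto.
Qed.

Definition phi (x : P) : BMset MP := exist _ _ (phi_inBM x).

Lemma BMset_ext (N1 N2 : BMset MP) : (forall q, proj1_sig N1 q <-> proj1_sig N2 q) -> N1 = N2.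
Proof.
  destruct N1 as [N1 H1], N2 as [N2 H2]; simpl; intro H.
  assert (N1 = N2) by (apply functional_extensionality; intro; apply propositional_extensionality; auto).
  subst; f_equal; apply proof_irrelevance.
Qed.

Lemma le_via_phi x y : (forall q : Msub, le (proj1_sig q) x -> le (proj1_sig q) y) -> le x y.
Proof.
  intro H; destruct (decomp x) as [ms [Hms Hx]]; rewrite Hx at 1; apply sum_lub; intros m Hm.
  apply (H (exist _ m (Hms m Hm))); simpl; rewrite Hx; apply sum_ub; auto.
Qed.

Lemma iso : isoBM P MP.
Proof.
  exists phi; split; [|split; [|split; [|split]]].
  - intros x y H; apply le_antisym; apply le_via_phi; intros q Hq;
      [change (proj1_sig (phi y) q); rewrite <- H; exact Hq|change (proj1_sig (phi x) q); rewrite H; exact Hq].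
  - intros [Np [[Hb Hc] [Hd [gs Hg]]]].
    exists (sumP (map (@proj1_sig _ _) gs)); apply BMset_ext; intro q; simpl.
    rewrite Hg, Gen; tauto.
  - intros x y q; unfold BMjoin; simpl; split; [apply jp2, proj2_sig|].
    intros [H|H]; eapply le_trans; eauto; [apply le_plus_l|apply le_plus_r].
  - intros q; simpl; tauto.
  - intros I x q; unfold BMact; simpl; split.
    + intro H; destruct (decomp x) as [ms [Hms Hx]].
      rewrite Hx, bact_sum in H; destruct (jp_list (proj2_sig q) H) as [H'|[z [Hz H']]].
      * exists (f1zero A), Mbase; split; [apply BA_zero|split; [apply le_zero|]].
        simpl; rewrite bact0r; exact H'.
      * apply in_map_iff in Hz as [m [<- Hm]].
        destruct q as [q [[c y] [Hv ->]]]; simpl in H' |- *.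
        apply K in H'; auto; unfold mem in H'; rewrite s_act in H'; simpl in H'.
        destruct H' as [f [b [Hf [Hb Hc]]]].
        exists f, (exist _ m (Hms m Hm)); split; auto; split; simpl.
        -- rewrite Hx; apply sum_ub; auto.
        -- rewrite Hc; change (le (tt (f * fst (b, y), snd (b, y))) (bact (princ f) m)); rewrite (tt_mul f (b, y)); apply bact_mono_r.
           apply mem_le; exact Hb.
    + intros [f [w [Hf [Hw Hq]]]]; simpl in Hq; eapply le_trans; [apply Hq|].
      eapply le_trans; [apply bact_mono_l with (J := I); intro g; apply princ_sub; exact Hf|].
      apply bact_mono_r; exact Hw.
Qed.

End Main.

Theorem mainTheorem15 (A : F1Pair) (P : BMod A) :
  projectiveB P -> exists M : POAMod A, isoBM P M.
Proof.
  intro Hproj.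
  destruct (Hproj (NM P) (@piN A P) (@piN_hom A P) (@piN_surj A P)) as [s [Hs Hps]].
  exists (@MP A P s Hs). apply (@iso A P s Hs Hps).
Qed.
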